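(* Let $D$ be a vertex-supported effective divisor on a metric graph $\Gamma$. If $f\in R(D)$ and $D+(f)$ is an anchor divisor, then $f$ has at most two linear pieces on each edge of $\Gamma$.
   Context: A metric graph $\Gamma=(V,E)$ is a connected undirected graph whose edges have positive real lengths. Divisors are finite formal $\mathbb{Z}$-combinations of points of $\Gamma$; effective means nonnegative coefficients; vertex-supported means support contained in $V$. A rational function is a continuous $f:\Gamma\to\mathbb{R}$, piecewise linear on each edge with finitely many pieces and integer slopes; $(f)=\sum_x\mathrm{ord}_x(f)x$, where $\mathrm{ord}_x(f)$ is the sum of the outgoing slopes of $f$ at $x$. $R(D)$ is the set of rational functions $f$ with $D+(f)$ effective. A divisor $L$ is an anchor divisor if for each edge of $\Gamma$ there is at most one interior point $x$ of that edge with $L(x)>0$. *)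

(* Defs.v *)
From HB Require Import structures.
From mathcomp Require Import all_boot all_order all_algebra.
From mathcomp Require Import reals.
From Stdlib Require Import ClassicalEpsilon.

Set Implicit Arguments.
Unset Strict Implicit.
Unset Printing Implicit Defensive.

Import Order.TTheory GRing.Theory Num.Theory.
Local Open Scope ring_scope.

(* A metric graph: finite (multi)graph, possibly with loops, each edge e
   oriented from mg_src e to mg_tgt e (orientation only fixes a
   parametrization [0, mg_len e] of the edge), positive lengths, connected. *)
Record metric_graph (R : realType) := MetricGraph {
  mg_V : finType;
  mg_E : finType;
  mg_src : mg_E -> mg_V;
  mg_tgt : mg_E -> mg_V;
  mg_len : mg_E -> R;
  mg_len_pos : forall e, 0 < mg_len e;
  mg_connected : forall u v : mg_V,
    connect (fun x y => [exists e, ((mg_src e == x) && (mg_tgt e == y))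
                                || ((mg_src e == y) && (mg_tgt e == x))]) u v
}.

Section MG.
Variables (R : realType) (G : metric_graph R).

(* Points of Gamma: a vertex, or the interior point at distance t from the
   source of edge e (valid only when 0 < t < len e). *)
Inductive point := PV of mg_V G | PE of mg_E G & R.

Definition is_point (x : point) : Prop :=
  match x with PV _ => True | PE e t => 0 < t < mg_len e end.

Definition edge_pt (e : mg_E G) (t : R) : point :=
  if t <= 0 then PV (mg_src e)
  else if mg_len e <= t then PV (mg_tgt e) else PE e t.

Definition edge_fun (f : point -> R) (e : mg_E G) : R -> R :=
  fun t => f (edge_pt e t).

Definition is_slope (g : R -> R) (t : R) (s : int) : Prop :=
  exists2 eps : R, 0 < eps &
    forall h : R, 0 < h < eps -> g (t + h) = g t + s%:~R * h.

Definition slope (g : R -> R) (t : R) : int :=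
  epsilon (inhabits 0%R) (is_slope g t).

Definition out_slope_fwd (f : point -> R) e t : int := slope (edge_fun f e) t.
Definition out_slope_bwd (f : point -> R) e t : int :=
  slope (fun u => edge_fun f e (t - u)) 0.

(* ord_x(f): the sum of the outgoing slopes of f at x *)
Definition ord (f : point -> R) (x : point) : int :=
  match x with
  | PV v => \sum_(e | mg_src e == v) out_slope_fwd f e 0
          + \sum_(e | mg_tgt e == v) out_slope_bwd f e (mg_len e)
  | PE e t => out_slope_fwd f e t + out_slope_bwd f e t
  end.

Definition pl_pieces (g : R -> R) (a b : R) (n : nat) : Prop :=
  exists (tb : nat -> R) (s : nat -> int),
    [/\ tb 0%N = a, tb n = b,
        forall i, (i < n)%N -> tb i < tb i.+1
      & forall i, (i < n)%N -> forall x, tb i <= x <= tb i.+1 ->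
          g x = g (tb i) + (s i)%:~R * (x - tb i)].

(* rational function: continuous, piecewise linear on every edge with finitely
   many pieces and integer slopes (continuity is built in: pieces are affine on
   closed intervals and edge endpoints are evaluated at the vertices). *)
Definition rational_fun (f : point -> R) : Prop :=
  forall e, exists n, pl_pieces (edge_fun f e) 0 (mg_len e) n.

Definition is_divisor (D : point -> int) : Prop :=
  exists s : seq point, forall x, is_point x -> D x != 0 -> List.In x s.

Definition effective (D : point -> int) : Prop :=
  forall x, is_point x -> 0 <= D x.

Definition vertex_supported (D : point -> int) : Prop :=
  forall e t, 0 < t < mg_len e -> D (PE e t) = 0.

Definition div_add_principal (D : point -> int) (f : point -> R) : point -> int :=
  fun x => D x + ord f x.

Definition in_RD (D : point -> int) (f : point -> R) : Prop :=
  rational_fun f /\ effective (div_add_principal D f).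

Definition anchor_divisor (L : point -> int) : Prop :=
  forall e t1 t2, 0 < t1 < mg_len e -> 0 < t2 < mg_len e ->
    0 < L (PE e t1) -> 0 < L (PE e t2) -> t1 = t2.

End MG.

(* Main.v *)
Require Import Defs.
From HB Require Import structures.
From mathcomp Require Import all_boot all_order all_algebra.
From mathcomp Require Import reals.
From mathcomp Require Import ring lra zify.
From Stdlib Require Import Lia.
From Stdlib Require Import Classical ClassicalEpsilon.
Import Order.TTheory GRing.Theory Num.Theory.
Local Open Scope ring_scope.

Section Aux.
Variable R : realType.

Lemma is_slope_uniq (g : R -> R) t s1 s2 :
  is_slope g t s1 -> is_slope g t s2 -> s1 = s2.
Proof.
move=> [e1 e1p H1] [e2 e2p H2].
set m := Order.min e1 e2.
have m0 : 0 < m by rewrite lt_min e1p e2p.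
have m1 : m <= e1 by rewrite ge_min lexx.
have m2 : m <= e2 by rewrite ge_min lexx orbT.
have h0 : 0 < m / 2 < e1 by apply/andP; split; lra.
have h1 : 0 < m / 2 < e2 by apply/andP; split; lra.
have := H1 _ h0; rewrite H2 //.
move/addrI => E; apply: (@intr_inj R); symmetry.
have mn : m / 2 != 0 by apply/negP => /eqP; lra.
exact: (mulIf mn E).
Qed.

Lemma slopeE (g : R -> R) t s : is_slope g t s -> slope g t = s.
Proof.
move=> H; apply: (@is_slope_uniq g t _ _ _ H); rewrite /slope.
by apply: epsilon_spec; exists s.
Qed.

Lemma tb_mono (tb : nat -> R) n : (forall i, (i < n)%N -> tb i < tb i.+1) ->
  forall i k, (i <= k <= n)%N -> tb i <= tb k.
Proof.
move=> H i; elim=> [|k IH] /andP [ik kn].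
  by move: ik; rewrite leqn0 => /eqP ->.
move: ik; rewrite leq_eqVlt => /orP [/eqP -> //| ik].
apply: le_trans (IH _) (ltW (H _ _)); first by apply/andP; split; lia.
lia.
Qed.

Arguments tb_mono {tb n}.

Lemma tb_smono (tb : nat -> R) n : (forall i, (i < n)%N -> tb i < tb i.+1) ->
  forall i k, (i < k <= n)%N -> tb i < tb k.
Proof.
move=> H i k /andP [ik kn].
have h1 : tb i < tb i.+1 by apply: H; lia.
have h2 : tb i.+1 <= tb k by apply: (tb_mono H); apply/andP; split; lia.
exact: lt_le_trans h1 h2.
Qed.

Arguments tb_smono {tb n}.

Lemma s_const (s : nat -> int) k m : (k <= m)%N ->
  (forall i, (k <= i < m)%N -> s i = s i.+1) -> s k = s m.
Proof.
elim: m => [|m IH] km H.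
  by move: km; rewrite leqn0 => /eqP ->.
move: km; rewrite leq_eqVlt => /orP [/eqP -> //| km].
rewrite IH; first by apply: H; lia.
  lia.
by move=> i ?; apply: H; lia.
Qed.

Lemma two_pieces (g : R -> R) (L : R) n tb s :
  0 < L -> tb 0%N = 0 -> tb n = L -> (forall i, (i<n)%N -> tb i < tb i.+1) ->
  (forall i, (i<n)%N -> forall x, tb i <= x <= tb i.+1 ->
      g x = g (tb i) + (s i)%:~R * (x - tb i)) ->
  (forall t, 0 < t < L -> 0 <= slope g t + slope (fun u => g (t - u)) 0) ->
  (forall t1 t2, 0 < t1 < L -> 0 < t2 < L ->
     0 < slope g t1 + slope (fun u => g (t1 - u)) 0 ->
     0 < slope g t2 + slope (fun u => g (t2 - u)) 0 -> t1 = t2) ->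
  exists m, (m <= 2)%N /\ pl_pieces g 0 L m.
Proof.
move=> L0 tb0 tbn tbI Hp Hge Hanc.
pose O t := slope g t + slope (fun u => g (t - u)) 0.
have n0 : (0 < n)%N.
  case: n tbn tbI Hp => // ; rewrite tb0 => E; lra.
have Obp i : (i.+1 < n)%N -> O (tb i.+1) = s i.+1 - s i.
  move=> Hi; rewrite /O.
  have d1 : 0 < tb i.+2 - tb i.+1 by have := tbI i.+1 Hi; lra.
  have d2 : 0 < tb i.+1 - tb i by have := tbI i (ltnW Hi); lra.
  rewrite (@slopeE _ _ (s i.+1)); last first.
    exists (tb i.+2 - tb i.+1) => // h /andP [h0 h1].
    rewrite (Hp i.+1 Hi); last by apply/andP; split; lra.
    congr (_ + _); congr (_ * _); ring.
  rewrite (@slopeE _ _ (- s i)); first by [].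
  exists (tb i.+1 - tb i) => // h /andP [h0 h1].
  rewrite /= add0r subr0.
  rewrite (Hp i (ltnW Hi) (tb i.+1 - h)); last by apply/andP; split; lra.
  rewrite (Hp i (ltnW Hi) (tb i.+1)); last by apply/andP; split; lra.
  rewrite intrN; set c := (s i)%:~R; ring.
have inter i : (i.+1 < n)%N -> 0 < tb i.+1 < L.
  move=> Hi; have := tbI i.+1 Hi.
  have := tb_smono tbI 0 i.+1; rewrite tb0 => A.
  have := tb_mono tbI i.+2 n; rewrite tbn => B.
  have a : 0 < tb i.+1 by apply: A => /=; exact: ltnW.
  have b : tb i.+2 <= L by apply: B; rewrite Hi leqnn.
  move=> c; apply/andP; split; lra.
have smono i : (i.+1 < n)%N -> s i <= s i.+1.
  move=> Hi; have := Hge _ (inter i Hi); rewrite -/(O _) Obp //.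
  by rewrite subr_ge0.
have suniq i j : (i.+1 < n)%N -> (j.+1 < n)%N -> s i != s i.+1 ->
    s j != s j.+1 -> i = j.
  move=> Hi Hj ni nj.
  have Pi : 0 < O (tb i.+1) by rewrite Obp // subr_gt0 lt_neqAle ni smono.
  have Pj : 0 < O (tb j.+1) by rewrite Obp // subr_gt0 lt_neqAle nj smono.
  have E := Hanc _ _ (inter i Hi) (inter j Hj) Pi Pj.
  case: (ltngtP i j) => // ij.
    have := tb_smono tbI i.+1 j.+1.
    rewrite E ltxx => X; exfalso; suff : false by []; apply: X; apply/andP; split; lia.
  have := tb_smono tbI j.+1 i.+1.
  rewrite E ltxx => X; exfalso; suff : false by []; apply: X; apply/andP; split; lia.
suff [c [a [b [c0 cL Pk]]]] : exists c (a b : int), [/\ 0 < c, c < L &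
   forall k, (k < n)%N -> (a = b /\ s k = a) \/ (tb k.+1 <= c /\ s k = a)
                           \/ (c <= tb k /\ s k = b)].
  pose hh x := if x <= c then g 0 + a%:~R * x else g 0 + a%:~R * c + b%:~R * (x - c).
  have hh1 y : y <= c -> hh y = g 0 + a%:~R * y by rewrite /hh => ->.
  have hh2 y : c <= y -> hh y = g 0 + a%:~R * c + b%:~R * (y - c).
    rewrite /hh le_eqVlt => /orP [/eqP -> | cy]; first by rewrite lexx subrr mulr0 addr0.
    by rewrite leNgt cy.
  have main k : (k <= n)%N -> forall x, 0 <= x <= tb k -> g x = hh x.
    elim: k => [|k IH] kn x /andP [x0 xk].
      have -> : x = 0 by move: xk; rewrite tb0 => xk; lra.
      by rewrite hh1 ?mulr0 ?addr0 //; lra.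
    case: (lerP x (tb k)) => xk'.
      by apply: IH; [exact: ltnW | apply/andP; split].
    have kn' : (k < n)%N by [].
    have xin : tb k <= x <= tb k.+1 by apply/andP; split; lra.
    have tk0 : 0 <= tb k by rewrite -tb0; apply: (tb_mono tbI); rewrite leq0n ltnW.
    rewrite (Hp k kn' x xin) (IH (ltnW kn)); last by apply/andP; split; lra.
    case: (Pk k kn') => [[ab sk] | [[kc sk] | [ck sk]]].
    - have hhl y : hh y = g 0 + a%:~R * y.
        case: (lerP y c) => yc; first by rewrite hh1.
        rewrite hh2 ?ab; [ring | lra].
      by rewrite !hhl sk; ring.
    - rewrite !hh1 ?sk; [ring | lra | lra].
    - rewrite !hh2 ?sk; [ring | lra | lra].
  have gL x : 0 <= x <= L -> g x = hh x.
    by move=> H; apply: (main n) => //; rewrite tbn.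
  exists 2%N; split => //.
  exists (fun i => if i == 0%N then 0 else if i == 1%N then c else L).
  exists (fun i => if i == 0%N then a else b).
  split => //.
    by case=> [|[|i]] //= _.
  case=> [|[|i]] //= _ x /andP [x1 x2].
    have -> : g x = hh x by apply: gL; apply/andP; split; lra.
    have -> : g 0 = hh 0 by apply: gL; apply/andP; split; lra.
    rewrite (hh1 x) // (hh1 0); [ring | lra].
  have -> : g x = hh x by apply: gL; apply/andP; split; lra.
  have -> : g c = hh c by apply: gL; apply/andP; split; lra.
  rewrite (hh2 x) // (hh2 c) ?lexx //; ring.
case: (classic (exists j, (j.+1 < n)%N /\ s j != s j.+1)) => [[j [Hj nj]] | nex].
  exists (tb j.+1), (s j), (s j.+1).
  have := inter j Hj => /andP [c0 cL]; split => // k kn.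
  right; case: (leqP k j) => kj.
    left; split.
      by apply: (tb_mono tbI); apply/andP; split; lia.
    apply: s_const => // i /andP [ki ij].
    apply/eqP; apply: contraT => ne.
    have Hi' : (i.+1 < n)%N by move: ij Hj; clear; lia.
    have := suniq _ _ Hi' Hj ne nj; move: ij; clear; lia.
  right; split.
    by apply: (tb_mono tbI); apply/andP; split; lia.
  symmetry; apply: s_const => // i /andP [ki ij].
  apply/eqP; apply: contraT => ne.
  have Hi' : (i.+1 < n)%N by move: ij kn; clear; lia.
  have := suniq _ _ Hi' Hj ne nj; move: ki; clear; lia.
exists (L / 2), (s 0%N), (s 0%N); split; try lra.
move=> k kn; left; split => //.
symmetry; apply: s_const => // i /andP [_ ik].
apply/eqP; apply: contraT => ne; exfalso; apply: nex; exists i; split => //; lia.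
Qed.

End Aux.

Theorem lemma2p15 (R : realType) (G : metric_graph R)
    (D : point G -> int) (f : point G -> R) :
  is_divisor D -> effective D -> vertex_supported D ->
  in_RD D f -> anchor_divisor (div_add_principal D f) ->
  forall e : mg_E G, exists n : nat,
    (n <= 2)%N /\ pl_pieces (edge_fun f e) 0 (mg_len e) n.
Proof.
move=> _ _ Dvs [Hrat Heff] Hanc e.
have [n [tb [s [tb0 tbn tbI Hp]]]] := Hrat e.
apply: (@two_pieces R (edge_fun f e) (mg_len e) n tb s) => //.
- exact: mg_len_pos.
- move=> t Ht; have := Heff (PE e t) Ht.
  by rewrite /div_add_principal Dvs // add0r.
- move=> t1 t2 H1 H2 P1 P2; apply: (Hanc e t1 t2 H1 H2).
    by rewrite /div_add_principal Dvs // add0r.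
  by rewrite /div_add_principal Dvs // add0r.
Qed.
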